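(* Let $k$ be a number field, $\mathcal G$ a finite group, $H$ a finite abelian group, $\mu:\mathcal G\to\mathrm{Aut}(H)$ an action, $k_1/k$ a Galois extension with group identified with $\mathcal G$, and $\tau\in H$. Then $k_1Z_{k_1/k,\mu,\tau}=k_1(\zeta_{o(\tau)})$.
   Context: $o(\tau)$ is the order of $\tau$ and $\zeta_t$ a primitive $t$-th root of unity. Let $\nu_{k,\tau}:\mathrm{Gal}(k(\zeta_{o(\tau)})/k)\to(\mathbb Z/o(\tau))^*$ be given by $g(\zeta_{o(\tau)})=\zeta_{o(\tau)}^{\nu_{k,\tau}(g)}$; $\tilde G_{k,\mu,\tau}=\{(g_1,g_2)\in\mathcal G\times\mathrm{Gal}(k(\zeta_{o(\tau)})/k):\mu(g_1)(\tau)=\tau^{\nu_{k,\tau}(g_2)}\}$. Identify $\mathrm{Gal}(k_1(\zeta_{o(\tau)})/k)$ with its image in $\mathcal G\times\mathrm{Gal}(k(\zeta_{o(\tau)})/k)$ via $g\mapsto(g|_{k_1},g|_{k(\zeta_{o(\tau)})})$, put $\tilde G_{k_1/k,\mu,\tau}=\tilde G_{k,\mu,\tau}\cap\mathrm{Gal}(k_1(\zeta_{o(\tau)})/k)$, and let $Z_{k_1/k,\mu,\tau}$ be its fixed field in $k_1(\zeta_{o(\tau)})$. *)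

(* Defs.v *)
From HB Require Import structures.
From mathcomp Require Import all_boot all_order all_algebra all_fingroup all_field.
From mathcomp Require Import boolp.
Set Implicit Arguments. Unset Strict Implicit. Unset Printing Implicit Defensive.
Import GRing.Theory.
Local Open Scope ring_scope.
Local Open Scope group_scope.

(* Setting: L a finite Galois-closed extension of Q (splittingFieldType rat) in which
   all fields live; k k1 : {subfield L}. zeta is a primitive #[tau]-th root of unity in L. *)

Section Tilde.
Variables (L : splittingFieldType rat) (k k1 : {subfield L}) (zeta : L).
Variables (gT hT : finGroupType) (G : {group gT}).
Variables (iota : {morphism 'Gal(k1 / k) >-> gT}) (mu : {morphism G >-> {perm hT}}).
Variable tau : hT.

Definition k1zeta : {subfield L} := <<k1; zeta>>%AS.

(* nu_{k,tau}(g2) = n  <->  g2(zeta) = zeta^n ; for g in Gal(k1(zeta)/k) the image in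
   G x Gal(k(zeta)/k) is (g|_{k1}, g|_{k(zeta)}), and g|_{k(zeta)}(zeta) = g(zeta). *)
Definition in_Gtilde (g : gal_of k1zeta) : Prop :=
  exists2 h, h \in 'Gal(k1 / k) &
    (forall x, x \in k1 -> h x = g x) /\
    (exists n : nat, (g zeta = zeta ^+ n)%R /\ mu (iota h) tau = tau ^+ n).

Definition Gtilde : {set gal_of k1zeta} :=
  [set g in 'Gal(k1zeta / k) | `[< in_Gtilde g >] ].

Definition Zfield : {vspace L} := fixedField Gtilde.
End Tilde.

(* Main.v *)
Require Import Defs.
From HB Require Import structures.
From mathcomp Require Import all_boot all_order all_algebra all_fingroup all_solvable all_field.
From mathcomp Require Import boolp.
Import GRing.Theory.
Local Open Scope ring_scope.
Local Open Scope group_scope.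

Lemma Gtilde_group_set
  (L : splittingFieldType rat) (k k1 : {subfield L})
  (gT hT : finGroupType) (G : {group gT}) (H : {group hT})
  (iota : {morphism 'Gal(k1 / k) >-> gT})
  (mu : {morphism G >-> {perm hT}})
  (tau : hT) (zeta : L) :
  isom 'Gal(k1 / k) G iota ->
  (mu @* G \subset Aut H)%g ->
  tau \in H ->
  group_set (Gtilde zeta iota mu tau).
Proof.
move=> /isomP[_ imG] sAut Htau.
have Eze : zeta \in k1zeta k1 zeta by apply: memv_adjoin.
have sk1E : (k1 <= k1zeta k1 zeta)%VS by apply: subv_adjoin.
apply/group_setP; split.
  rewrite inE group1 /=; apply/asboolP; exists 1 => //; split.
    by move=> x _; rewrite !gal_id.
  exists 1%N; rewrite gal_id expr1 expg1 !morph1; split => //.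
  by rewrite perm1.
move=> g1 g2; rewrite !inE => /andP[Gg1 /asboolP[h1 Gh1 [e1 [n1 [z1 t1]]]]].
move=> /andP[Gg2 /asboolP[h2 Gh2 [e2 [n2 [z2 t2]]]]].
rewrite groupM //=; apply/asboolP; exists (h1 * h2); first exact: groupM.
split.
  move=> x Hx; rewrite !galM //; last exact: subvP sk1E x Hx.
  by rewrite -e1 // e2 // memv_gal.
exists (n2 * n1)%N; split.
  by rewrite galM // z1 rmorphXn /= z2 -exprM.
have iG1 : iota h1 \in G by rewrite -imG mem_morphim.
have iG2 : iota h2 \in G by rewrite -imG mem_morphim.
have AH : forall a, a \in G -> mu a \in Aut H.
  by move=> a Ga; apply: (subsetP sAut); rewrite mem_morphim.
rewrite morphM // morphM //= ?mem_morphim // permM t1.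
rewrite -(autmE (AH _ iG2)) morphX //= autmE t2 -expgM mulnC.
done.
Qed.

Theorem mainTheorem15
  (L : splittingFieldType rat) (k k1 : {subfield L})
  (gT hT : finGroupType) (G : {group gT}) (H : {group hT})
  (iota : {morphism 'Gal(k1 / k) >-> gT})
  (mu : {morphism G >-> {perm hT}})
  (tau : hT) (zeta : L) :
  galois k k1 ->
  isom 'Gal(k1 / k) G iota ->
  abelian H ->
  (mu @* G \subset Aut H)%g ->
  tau \in H ->
  (#[tau]%g).-primitive_root zeta ->
  (k1 * Zfield zeta iota mu tau)%VS = (k1zeta k1 zeta)%VS.
Proof.
move=> _ isoI _ sAut Htau prim.
have grp := @Gtilde_group_set _ _ _ _ _ _ H _ _ _ zeta isoI sAut Htau.
set E := k1zeta k1 zeta.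
have Eze : zeta \in E by apply: memv_adjoin.
have sk1E : (k1 <= E)%VS by apply: subv_adjoin.
set A := Gtilde zeta iota mu tau.
have ZE : (Zfield zeta iota mu tau <= E)%VS by apply: fixedField_bound.
have sME : (k1 * Zfield zeta iota mu tau <= E)%VS by apply: prodv_sub.
apply/eqP; rewrite eqEsubv sME /=.
pose M := (k1 * fixedField A)%AS.
have galME : galois M E.
  apply: (galoisS (K := fixedField A)); last exact: fixedField_galois.
  by rewrite field_subvMl sME.
have sk1M : (k1 <= M)%VS by apply: field_subvMr.
have sZM : (fixedField A <= M)%VS by apply: field_subvMl.
apply/FadjoinP; split => //.
move/galois_fixedField: galME => <-.
apply/fixedFieldP => // g galg.
have gA : g \in A.
  suff : g \in <<A>> by rewrite gen_set_id.
  rewrite -gal_generated.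
  by apply: (subsetP (galS E sZM)).
have fk1 : forall x, x \in k1 -> g x = x.
  by move=> x Hx; apply: (fixed_gal sME galg); apply: (subvP sk1M).
move: gA; rewrite inE => /andP[_ /asboolP[h Gh [eh [n [zn tn]]]]].
have h1 : h = 1.
  apply/eqP/gal_eqP => x Hx; by rewrite eh // fk1 // gal_id.
move: tn; rewrite h1 !morph1 perm1 => tn.
rewrite zn -(prim_expr_mod prim).
have : tau ^+ n = tau ^+ 1 by rewrite expg1.
move/eqP; rewrite eq_expg_mod_order => /eqP ->.
by rewrite prim_expr_mod // expr1.
Qed.
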